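(* Let $\epsilon$ be real and, for $i=1,2$, let $\alpha_i,\beta_i,\eta_i$ be real constants with $\beta_i^2=e^{\alpha_i\epsilon}+e^{-\alpha_i\epsilon}-2$. Assume $P(p_1+p_2)\neq0$ and set $A(1,2)=-\dfrac{P(p_1-p_2)}{P(p_1+p_2)}$. Then $$f(x,t)=1+e^{\theta_1}+e^{\theta_2}+A(1,2)e^{\theta_1+\theta_2},\qquad \theta_i=-\frac{\alpha_i}{x}+\beta_i t+\eta_i,$$ satisfies the bilinear generalized $q$-Toda equation $\big[D_t^2-\big(e^{\epsilon x^2D_x}+e^{-\epsilon x^2 D_x}-2\big)\big]f\cdot f=0$.
   Context: Hirota operators: $P(D_x,D_t)\,f\cdot g := P(\partial_x-\partial_{x'},\partial_t-\partial_{t'})f(x,t)g(x',t')|_{x'=x,t'=t}$; $e^{\pm\epsilon x^2 D_x} f\cdot g$ means $f\!\left(\frac{x}{1\mp\epsilon x}\right)g\!\left(\frac{x}{1\pm\epsilon x}\right)$. For a vector $p=(\beta,\alpha,\eta)$ define $P(p)=\beta^2-\big(e^{\alpha\epsilon}+e^{-\alpha\epsilon}-2\big)$, and $p_i=(\beta_i,\alpha_i,\eta_i)$ with componentwise sums and differences. *)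

(* Defs.v *)
From Stdlib Require Import Reals.
Open Scope R_scope.

(* P(p) = beta^2 - (e^{alpha eps} + e^{-alpha eps} - 2), for p = (beta, alpha, eta). *)
Definition Pq (eps beta alpha : R) : R :=
  beta ^ 2 - (exp (alpha * eps) + exp (- (alpha * eps)) - 2).

Definition A12 (eps a1 b1 a2 b2 : R) : R :=
  - (Pq eps (b1 - b2) (a1 - a2) / Pq eps (b1 + b2) (a1 + a2)).

Definition theta (a b e x t : R) : R := - (a / x) + b * t + e.

Definition f2 (eps a1 b1 e1 a2 b2 e2 : R) (x t : R) : R :=
  1 + exp (theta a1 b1 e1 x t) + exp (theta a2 b2 e2 x t)
    + A12 eps a1 b1 a2 b2 * exp (theta a1 b1 e1 x t + theta a2 b2 e2 x t).

(* Bilinear operator [D_t^2 - (e^{eps x^2 D_x} + e^{-eps x^2 D_x} - 2)] f.f at (x,t),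
   given ft = df/dt and ftt = d^2f/dt^2:
   D_t^2 f.f = 2 (f f_tt - f_t^2);
   e^{eps x^2 D_x} f.f = f(x/(1-eps x)) f(x/(1+eps x));
   e^{-eps x^2 D_x} f.f = f(x/(1+eps x)) f(x/(1-eps x));
   2 f.f = 2 f(x)^2. *)
Definition qToda_bilinear (eps : R) (f ft ftt : R -> R -> R) (x t : R) : R :=
  (ftt x t * f x t - 2 * ft x t * ft x t + f x t * ftt x t)
  - ( f (x / (1 - eps * x)) t * f (x / (1 + eps * x)) t
    + f (x / (1 + eps * x)) t * f (x / (1 - eps * x)) t
    - 2 * (f x t * f x t) ).

(* Main.v *)
Require Import Defs.
From Stdlib Require Import Reals Lra.
From Coquelicot Require Import Coquelicot.
Open Scope R_scope.

Lemma theta_shift (a b e eps x t : R) : x <> 0 -> 1 - eps * x <> 0 ->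
  exp (theta a b e (x / (1 - eps * x)) t) = exp (theta a b e x t) * exp (a * eps).
Proof.
  intros Hx H. rewrite <- exp_plus. f_equal. unfold theta. field. split; auto.
Qed.

Lemma theta_shift' (a b e eps x t : R) : x <> 0 -> 1 + eps * x <> 0 ->
  exp (theta a b e (x / (1 + eps * x)) t) = exp (theta a b e x t) * / exp (a * eps).
Proof.
  intros Hx H. rewrite <- exp_Ropp, <- exp_plus. f_equal. unfold theta. field. split; auto.
Qed.

Theorem mainTheorem3 (eps a1 b1 e1 a2 b2 e2 : R)
  (H1 : b1 ^ 2 = exp (a1 * eps) + exp (- (a1 * eps)) - 2)
  (H2 : b2 ^ 2 = exp (a2 * eps) + exp (- (a2 * eps)) - 2)
  (HP : Pq eps (b1 + b2) (a1 + a2) <> 0) :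
  let f := f2 eps a1 b1 e1 a2 b2 e2 in
  exists ft ftt : R -> R -> R,
    (forall x t, x <> 0 -> derivable_pt_lim (fun s => f x s) t (ft x t)) /\
    (forall x t, x <> 0 -> derivable_pt_lim (fun s => ft x s) t (ftt x t)) /\
    (forall x t, x <> 0 -> 1 - eps * x <> 0 -> 1 + eps * x <> 0 ->
       qToda_bilinear eps f ft ftt x t = 0).
Proof.
  intro f.
  set (A := A12 eps a1 b1 a2 b2).
  exists (fun x t => b1 * exp (theta a1 b1 e1 x t) + b2 * exp (theta a2 b2 e2 x t)
     + A * (b1 + b2) * exp (theta a1 b1 e1 x t + theta a2 b2 e2 x t)).
  exists (fun x t => b1^2 * exp (theta a1 b1 e1 x t) + b2^2 * exp (theta a2 b2 e2 x t)
     + A * (b1 + b2)^2 * exp (theta a1 b1 e1 x t + theta a2 b2 e2 x t)).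
  split; [|split].
  - intros x t Hx. apply is_derive_Reals. unfold f, f2, theta.
    auto_derive; [trivial | unfold A; ring].
  - intros x t Hx. apply is_derive_Reals. unfold theta.
    auto_derive; [trivial | unfold A; ring].
  - intros x t Hx Hm Hp.
    unfold qToda_bilinear, f, f2.
    rewrite !exp_plus.
    rewrite !theta_shift by assumption.
    rewrite !theta_shift' by assumption.
    fold A.
    set (E1 := exp (theta a1 b1 e1 x t)).
    set (E2 := exp (theta a2 b2 e2 x t)).
    assert (hA : A * Pq eps (b1 + b2) (a1 + a2) + Pq eps (b1 - b2) (a1 - a2) = 0).
    { unfold A, A12. field. exact HP. }
    unfold Pq in hA.
    replace ((a1 + a2) * eps) with (a1 * eps + a2 * eps) in hA by ring.
    replace ((a1 - a2) * eps) with (a1 * eps + - (a2 * eps)) in hA by ring.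
    rewrite !Ropp_plus_distr, !exp_plus, !exp_Ropp, ?Ropp_involutive in hA.
    rewrite exp_Ropp in H1, H2.
    set (u1 := exp (a1 * eps)) in *.
    set (u2 := exp (a2 * eps)) in *.
    assert (hu1 : u1 <> 0) by (unfold u1; apply Rgt_not_eq, exp_pos).
    assert (hu2 : u2 <> 0) by (unfold u2; apply Rgt_not_eq, exp_pos).
    set (h1 := b1 ^ 2 - (u1 + / u1 - 2)).
    set (h2 := b2 ^ 2 - (u2 + / u2 - 2)).
    assert (e1' : h1 = 0) by (unfold h1; lra).
    assert (e2' : h2 = 0) by (unfold h2; lra).
    transitivity (2 * (E1 + A * E1 * E2 ^ 2) * h1 + 2 * (E2 + A * E1 ^ 2 * E2) * h2
       + 2 * E1 * E2 * ((A * ((b1 + b2) ^ 2 - (u1 * u2 + / u1 * / u2 - 2)) +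
          ((b1 - b2) ^ 2 - (u1 * / u2 + / u1 * u2 - 2))))).
    + unfold h1, h2. field. split; assumption.
    + rewrite Rinv_inv in hA. rewrite e1', e2', hA. ring.
Qed.
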